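(* Let $(X,T)$ be a topological dynamical system with metric $\rho$, and let $A\subseteq X$ be a subset with the property that for every $x\in A$ and $\epsilon>0$ there exists $y\in A$ such that $\{n\in\mathbb Z:\rho(T^ny,x)<\epsilon\}$ is piecewise syndetic. Then for every $\epsilon>0$ there exists $z\in A$ such that $\{n\in\mathbb Z:\rho(T^nz,z)<\epsilon\}$ is piecewise syndetic.
   Context: A topological dynamical system is $(X,T)$ with $X$ compact metric and $T$ a homeomorphism. $S\subseteq\mathbb Z$ is syndetic if it has bounded gaps, thick if it contains arbitrarily long runs of consecutive integers, piecewise syndetic if it is the intersection of a syndetic and a thick set. *)

(* Defs.v *)
From Stdlib Require Import Reals ZArith.
Open Scope R_scope.

Record is_metric {X : Type} (d : X -> X -> R) : Prop := {
  metric_nonneg : forall x y, 0 <= d x y;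
  metric_eq0 : forall x y, d x y = 0 <-> x = y;
  metric_sym : forall x y, d x y = d y x;
  metric_tri : forall x y z, d x z <= d x y + d y z }.

Definition metric_continuous {X : Type} (d : X -> X -> R) (f : X -> X) : Prop :=
  forall x eps, 0 < eps -> exists del, 0 < del /\
    forall y, d x y < del -> d (f x) (f y) < eps.

(* Compactness of the metric space (sequential compactness, equivalent
   to compactness for metric spaces). *)
Definition metric_compact {X : Type} (d : X -> X -> R) : Prop :=
  forall u : nat -> X, exists (phi : nat -> nat) (l : X),
    (forall n m, (n < m)%nat -> (phi n < phi m)%nat) /\
    forall eps, 0 < eps -> exists N, forall n, (N <= n)%nat -> d (u (phi n)) l < eps.

Definition TDS {X : Type} (d : X -> X -> R) (T Tinv : X -> X) : Prop :=
  is_metric d /\ metric_compact d /\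
  (forall x, Tinv (T x) = x) /\ (forall x, T (Tinv x) = x) /\
  metric_continuous d T /\ metric_continuous d Tinv.

Definition iterZ {X : Type} (T Tinv : X -> X) (n : Z) (x : X) : X :=
  match n with
  | Z0 => x
  | Zpos p => Nat.iter (Pos.to_nat p) T x
  | Zneg p => Nat.iter (Pos.to_nat p) Tinv x
  end.

Definition syndetic (S : Z -> Prop) : Prop :=
  exists L : Z, (0 < L)%Z /\ forall a : Z, exists n, (a <= n < a + L)%Z /\ S n.

Definition thick (S : Z -> Prop) : Prop :=
  forall L : Z, exists a : Z, forall n, (a <= n < a + L)%Z -> S n.

Definition piecewise_syndetic (S : Z -> Prop) : Prop :=
  exists S1 S2 : Z -> Prop, syndetic S1 /\ thick S2 /\
    forall n, S n <-> (S1 n /\ S2 n).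

(* Main.v *)
Require Import Defs.
From Stdlib Require Import Reals ZArith.
From Stdlib Require Import Lra Lia List Classical ClassicalEpsilon.
Import ListNotations.
Open Scope R_scope.

Section Aux.
Context {X : Type} (rho : X -> X -> R) (T Tinv : X -> X).

Lemma iterZ_succ (hTi : forall x, T (Tinv x) = x) k x :
  iterZ T Tinv (Z.succ k) x = T (iterZ T Tinv k x).
Proof.
  destruct k as [|p|p].
  - reflexivity.
  - replace (Z.succ (Z.pos p)) with (Z.pos (Pos.succ p)) by lia.
    unfold iterZ. rewrite Pos2Nat.inj_succ. reflexivity.
  - destruct (Pos.succ_pred_or p) as [->| <-].
    + simpl. now rewrite hTi.
    + set (q := Pos.pred p).
      replace (Z.succ (Z.neg (Pos.succ q))) with (Z.neg q) by lia.
      unfold iterZ. rewrite Pos2Nat.inj_succ. simpl. now rewrite hTi.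
Qed.

Lemma iterZ_pred (hT : forall x, Tinv (T x) = x) (hTi : forall x, T (Tinv x) = x) k x :
  iterZ T Tinv (Z.pred k) x = Tinv (iterZ T Tinv k x).
Proof.
  rewrite <- (Z.succ_pred k) at 2. rewrite iterZ_succ by auto. now rewrite hT.
Qed.

Lemma iterZ_add (hT : forall x, Tinv (T x) = x) (hTi : forall x, T (Tinv x) = x) n :
  forall k x, iterZ T Tinv (k + n) x = iterZ T Tinv n (iterZ T Tinv k x).
Proof.
  induction n using Z.peano_ind; intros k x.
  - now rewrite Z.add_0_r.
  - replace (k + Z.succ n)%Z with (Z.succ (k + n)) by lia.
    rewrite !iterZ_succ by auto. now rewrite IHn.
  - replace (k + Z.pred n)%Z with (Z.pred (k + n)) by lia.
    rewrite !iterZ_pred by auto. now rewrite IHn.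
Qed.

Lemma iter_cont f (hf : metric_continuous rho f) k : metric_continuous rho (Nat.iter k f).
Proof.
  induction k; simpl.
  - intros x eps he. exists eps. split; auto.
  - intros x eps he. destruct (hf (Nat.iter k f x) eps he) as [d1 [hd1 H1]].
    destruct (IHk x d1 hd1) as [d2 [hd2 H2]]. exists d2. split; auto.
    intros y hy. apply H1, H2, hy.
Qed.

Lemma iterZ_cont (hc : metric_continuous rho T) (hci : metric_continuous rho Tinv) n :
  metric_continuous rho (iterZ T Tinv n).
Proof.
  destruct n; simpl.
  - intros x eps he. exists eps. split; auto.
  - apply iter_cont; auto.
  - apply iter_cont; auto.
Qed.

Lemma ps_super (S S' : Z -> Prop) : piecewise_syndetic S -> (forall n, S n -> S' n) ->
  piecewise_syndetic S'.
Proof.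
  intros [S1 [S2 [h1 [h2 h3]]]] hs.
  exists (fun n => S1 n \/ S' n), (fun n => S2 n \/ S' n). split; [|split].
  - destruct h1 as [L [hL h1]]. exists L. split; auto. intro a.
    destruct (h1 a) as [n [hn hn']]. exists n. auto.
  - intro L. destruct (h2 L) as [a ha]. exists a. auto.
  - intro n. split; [tauto|]. intros [[a|a] [b|b]]; auto.
    apply hs, h3; auto.
Qed.

Lemma ps_shift (S : Z -> Prop) m : piecewise_syndetic S ->
  piecewise_syndetic (fun k => S (k - m)%Z).
Proof.
  intros [S1 [S2 [h1 [h2 h3]]]].
  exists (fun k => S1 (k - m)%Z), (fun k => S2 (k - m)%Z). split; [|split].
  - destruct h1 as [L [hL h1]]. exists L. split; auto. intro a.
    destruct (h1 (a - m)%Z) as [n [hn hn']]. exists (n + m)%Z.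
    replace (n + m - m)%Z with n by lia. split; auto; lia.
  - intro L. destruct (h2 L) as [a ha]. exists (a + m)%Z. intros n hn. apply ha. lia.
  - intro n. apply h3.
Qed.

Lemma ps_ne (S : Z -> Prop) : piecewise_syndetic S -> exists n, S n.
Proof.
  intros [S1 [S2 [h1 [h2 h3]]]]. destruct h1 as [L [hL h1]].
  destruct (h2 L) as [a ha]. destruct (h1 a) as [n [hn hn']].
  exists n. apply h3. auto.
Qed.

Definition Q z x r := piecewise_syndetic (fun n => rho (iterZ T Tinv n z) x < r).

Lemma Q_mono z x r r' : Q z x r -> r <= r' -> Q z x r'.
Proof. intros h hr. eapply ps_super; [exact h|]. simpl; intros; lra. Qed.

Lemma Q_open (hsys : TDS rho T Tinv) y x r : Q y x r ->
  exists del, 0 < del /\ forall z, Q z y del -> Q z x r.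
Proof.
  destruct hsys as [hm [_ [hT [hTi [hc hci]]]]].
  intro h. destruct (ps_ne _ h) as [n hn]. simpl in hn.
  destruct (iterZ_cont hc hci n y (r - rho (iterZ T Tinv n y) x)) as [del [hd H]]. lra.
  exists del. split; auto. intros z hz.
  eapply ps_super; [apply (ps_shift _ n hz)|]. simpl. intros k hk.
  rewrite (metric_sym _ hm) in hk. specialize (H _ hk). rewrite <- iterZ_add in H by auto.
  replace (k - n + n)%Z with k in H by lia.
  pose proof (metric_tri _ hm (iterZ T Tinv k z) (iterZ T Tinv n y) x).
  rewrite (metric_sym _ hm (iterZ T Tinv k z) (iterZ T Tinv n y)) in H0. lra.
Qed.

Lemma Q_fin (hsys : TDS rho T Tinv) x r (l : list X) :
  (forall y, In y l -> Q x y r) ->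
  exists del, 0 < del /\ forall z, Q z x del -> forall y, In y l -> Q z y r.
Proof.
  induction l as [|a l IH]; intros H.
  - exists 1. split; [lra|]. intros z _ y [].
  - destruct IH as [d1 [hd1 H1]]. { intros y hy. apply H. now right. }
    destruct (Q_open hsys x a r (H a (or_introl eq_refl))) as [d2 [hd2 H2]].
    exists (Rmin d1 d2). split. { apply Rmin_pos; auto. }
    intros z hz y [<-|hy].
    + apply H2. eapply Q_mono; [exact hz|]. apply Rmin_r.
    + apply H1; auto. eapply Q_mono; [exact hz|]. apply Rmin_l.
Qed.

Fixpoint Inv (A : X -> Prop) r (l : list X) : Prop :=
  match l with
  | nil => True
  | x :: rest => A x /\ (forall y, In y rest -> Q x y r) /\ Inv A r rest
  end.

Fixpoint hist (g : list X -> X) (a0 : X) (n : nat) : list X :=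
  match n with
  | O => [a0]
  | S n => g (hist g a0 n) :: hist g a0 n
  end.

Definition xs g a0 n := match n with O => a0 | S n => g (hist g a0 n) end.

Lemma hist_eq g a0 n : hist g a0 n = xs g a0 n :: match n with O => nil | S m => hist g a0 m end.
Proof. destruct n; reflexivity. Qed.

Lemma in_hist g a0 i n : (i <= n)%nat -> In (xs g a0 i) (hist g a0 n).
Proof.
  induction n; intros h.
  - assert (i = O) by lia. subst. now left.
  - destruct (Nat.eq_dec i (S n)) as [->|ne]. { now left. }
    right. apply IHn. lia.
Qed.

End Aux.

Theorem mainTheorem10 (X : Type) (rho : X -> X -> R) (T Tinv : X -> X)
  (hsys : TDS rho T Tinv) (A : X -> Prop) (hAne : exists a, A a)
  (hA : forall x, A x -> forall eps, 0 < eps ->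
     exists y, A y /\ piecewise_syndetic (fun n => rho (iterZ T Tinv n y) x < eps)) :
  forall eps, 0 < eps ->
    exists z, A z /\ piecewise_syndetic (fun n => rho (iterZ T Tinv n z) z < eps).
Proof.
  intros eps he. destruct hAne as [a0 ha0].
  set (r := eps / 2).
  assert (hr : 0 < r) by (unfold r; lra).
  assert (step : forall l, exists x, Inv rho T Tinv A r l -> l <> nil -> Inv rho T Tinv A r (x :: l)).
  { intros [|x rest].
    - exists a0. intros _ h. now contradiction h.
    - destruct (classic (Inv rho T Tinv A r (x :: rest))) as [hi|hni].
      2:{ exists a0. intros h. contradiction. }
      destruct hi as [hx [hq hrest]].
      destruct (Q_fin rho T Tinv hsys x r rest hq) as [del [hd H]].
      destruct (hA x hx (Rmin del r)) as [y0 [hy0 hps]]. { apply Rmin_pos; auto. }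
      exists y0. intros _ _. split; [auto|split; [|split; auto]].
      intros y [<-|hy].
      + eapply Q_mono; [exact hps|]. apply Rmin_r.
      + apply H; auto. eapply Q_mono; [exact hps|]. apply Rmin_l. }
  set (g := fun l => proj1_sig (constructive_indefinite_description _ (step l))).
  assert (hg : forall l, Inv rho T Tinv A r l -> l <> nil -> Inv rho T Tinv A r (g l :: l)).
  { intro l. unfold g. destruct (constructive_indefinite_description _ (step l)). auto. }
  assert (hinv : forall n, Inv rho T Tinv A r (hist g a0 n)).
  { induction n.
    - simpl. repeat split; auto. intros y [].
    - simpl. apply hg; auto. rewrite hist_eq. discriminate. }
  assert (key : forall i j, (i < j)%nat -> A (xs g a0 j) /\ Q rho T Tinv (xs g a0 j) (xs g a0 i) r).
  { intros i j hij. destruct j as [|j']. lia.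
    pose proof (hinv (S j')) as hi. simpl in hi. destruct hi as [h1 [h2 _]].
    split; auto. apply h2. apply in_hist. lia. }
  destruct hsys as [hm [hcpt _]].
  destruct (hcpt (xs g a0)) as [phi [l [hphi hl]]].
  destruct (hl (eps / 4)) as [N hN]. lra.
  pose proof (hN N (le_n _)) as h1. pose proof (hN (S N) (le_S _ _ (le_n _))) as h2.
  destruct (key (phi N) (phi (S N)) (hphi _ _ (Nat.lt_succ_diag_r N))) as [hA' hQ].
  exists (xs g a0 (phi (S N))). split; auto.
  eapply ps_super; [exact hQ|]. simpl. intros n hn.
  pose proof (metric_tri _ hm (iterZ T Tinv n (xs g a0 (phi (S N)))) (xs g a0 (phi N)) (xs g a0 (phi (S N)))).
  pose proof (metric_tri _ hm (xs g a0 (phi N)) l (xs g a0 (phi (S N)))).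
  rewrite (metric_sym _ hm l) in H0. unfold r in hn. lra.
Qed.
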